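(* The matroid $V_{10}/5$ (which is isomorphic to $V_{10}/7$) has the half-plane property; equivalently, the polynomial $\frac{\partial f_{10}}{\partial x_5}$ is stable.
   Context: $V_{10}$ is the matroid on $\{1,\dots,10\}$ whose bases are all $4$-element subsets of $\{1,\dots,10\}$ except $\{1,2,3,4\},\{1,2,5,6\},\{1,2,7,8\},\{1,2,9,10\},\{3,4,5,6\},\{5,6,7,8\},\{7,8,9,10\}$, and $f_{10}=\sum_{B}\prod_{i\in B}x_i$ (sum over bases $B$ of $V_{10}$) is its basis generating polynomial. For a matroid $M$ and element $e$, the contraction $M/e$ has as bases the sets $B\setminus\{e\}$ for bases $B$ of $M$ containing $e$; its basis generating polynomial is the partial derivative with respect to $x_e$ of that of $M$. A homogeneous real polynomial $f$ is stable if for all vectors $v$ with all entries positive and all real vectors $w$, $f(tv+w)\in\mathbb{R}[t]$ has only real roots; a matroid has the half-plane property if its basis generating polynomial is stable. *)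

(* Defs.v *)
From HB Require Import structures.
From mathcomp Require Import all_boot all_order all_algebra.
From mathcomp Require Import mpoly.
From mathcomp Require Import complex.
From Stdlib Require Import Reals.
From mathcomp Require Import Rstruct.

Set Implicit Arguments. Unset Strict Implicit. Unset Printing Implicit Defensive.
Import Order.TTheory GRing.Theory Num.Theory.
Local Open Scope ring_scope.

(* Ground set {1,...,10} is encoded as 'I_10 : element k is (k-1 : 'I_10). *)
Definition e10 (k : nat) : 'I_10 := inord k.-1.

Definition V10_nonbases : seq {set 'I_10} :=
  [:: [set e10 1; e10 2; e10 3; e10 4];
      [set e10 1; e10 2; e10 5; e10 6];
      [set e10 1; e10 2; e10 7; e10 8];
      [set e10 1; e10 2; e10 9; e10 10];
      [set e10 3; e10 4; e10 5; e10 6];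
      [set e10 5; e10 6; e10 7; e10 8];
      [set e10 7; e10 8; e10 9; e10 10]].

Definition V10_basis (B : {set 'I_10}) : bool :=
  (#|B| == 4)%N && (B \notin V10_nonbases).

Definition f10 : {mpoly R[10]} :=
  \sum_(B : {set 'I_10} | V10_basis B) \prod_(i in B) 'X_i.

Definition restrict_line (n : nat) (f : {mpoly R[n]}) (v w : 'I_n -> R) : {poly R} :=
  (map_mpoly (polyC : R -> {poly R}) f).@[fun i => 'X * (v i)%:P + (w i)%:P].

Definition stable (n : nat) (f : {mpoly R[n]}) : Prop :=
  forall v w : 'I_n -> R, (forall i, 0 < v i) ->
    forall z : R[i], root (map_poly (fun c : R => (c%:C)%C) (restrict_line f v w)) z ->
      complex.Im z = 0.

(* Main.v *)
Require Import Defs.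
From HB Require Import structures.
From mathcomp Require Import all_boot all_order all_algebra.
From mathcomp Require Import mpoly.
From mathcomp Require Import complex.
From Stdlib Require Import Reals.
From mathcomp Require Import Rstruct.
From mathcomp Require Import ring lra.
Import Order.TTheory GRing.Theory Num.Theory.
Local Open Scope ring_scope.

Section MD.
Variables (n : nat) (T : comRingType).
Lemma mderivXU (i j : 'I_n) : mderiv i ('X_j : {mpoly T[n]}) = (i == j)%:R.
Proof.
rewrite mderivX mnm1E; case: (eqVneq j i) => [->|ne].
  set m := (_ - _)%MM; have -> : m = 0%MM by apply/mnmP=> k; rewrite !mnmE subnn.
  by rewrite mpolyX0 /= ?eqxx ?scale1r // mulr1.
by rewrite ?scale0r // eq_sym (negbTE ne).
Qed.

Lemma mderiv_prod_notin (i : 'I_n) (P : pred 'I_n) :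
  ~~ P i -> mderiv i (\prod_(j | P j) ('X_j : {mpoly T[n]})) = 0.
Proof.
move=> Pi; apply: (big_ind (fun p => mderiv i p = 0)).
- by rewrite -mpolyC1 mderivC.
- by move=> x y hx hy; rewrite mderivM hx hy mul0r mulr0 addr0.
- move=> j Pj; rewrite mderivXU; case: eqP => // E.
  by move: Pi; rewrite E Pj.
Qed.

Lemma mderiv_prod_set (i : 'I_n) (B : {set 'I_n}) :
  mderiv i (\prod_(j in B) ('X_j : {mpoly T[n]})) =
  if i \in B then \prod_(j in B | j != i) 'X_j else 0.
Proof.
case: ifP => iB.
  rewrite (bigD1 i) //= mderivM mderivXU eqxx mul1r mderiv_prod_notin ?mulr0 ?addr0 //.
  by rewrite eqxx andbF.
by apply: mderiv_prod_notin; rewrite iB.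
Qed.
End MD.

Lemma restrict_eq (v w : 'I_10 -> R) :
  restrict_line (mderiv (e10 5) f10) v w =
  \sum_(B | V10_basis B) (if e10 5 \in B then
     \prod_(j in B | j != e10 5) ('X * (v j)%:P + (w j)%:P) else 0).
Proof.
rewrite /restrict_line /f10.
rewrite (big_morph (mderiv (e10 5)) (@mderivD _ _ _) (@mderiv0 _ _ _)).
rewrite (big_morph (fun p : {mpoly R[10]} => (map_mpoly (polyC : R -> {poly R}) p).@[fun i => 'X * (v i)%:P + (w i)%:P]) (id1 := 0) (op1 := +%R)); last first.
- by rewrite raddf0 meval0.
- by move=> x y; rewrite raddfD mevalD.
apply: eq_bigr => B _.
rewrite mderiv_prod_set; case: ifP => _; last by rewrite raddf0 meval0.
rewrite (big_morph (fun p : {mpoly R[10]} => (map_mpoly (polyC : R -> {poly R}) p).@[fun i => 'X * (v i)%:P + (w i)%:P]) (id1 := 1) (op1 := *%R)); last first.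
- by rewrite rmorph1 meval1.
- by move=> x y; rewrite rmorphM mevalM.
apply: eq_bigr => j _.
by rewrite map_mpolyX mevalXU.
Qed.

Lemma root_sum (v w : 'I_10 -> R) (z : R[i]) :
  root (map_poly (fun c : R => (c%:C)%C) (restrict_line (mderiv (e10 5) f10) v w)) z ->
  \sum_(B | V10_basis B) (if e10 5 \in B then
     \prod_(j in B | j != e10 5) (z * (v j)%:C + (w j)%:C)%C else 0) = 0.
Proof.
rewrite restrict_eq /root => /eqP H; rewrite -[RHS]H.
change (fun c : R => (c%:C)%C) with (real_complex R).
rewrite rmorph_sum horner_sum.
apply: eq_bigr => B _.
case: ifP => _; last by rewrite rmorph0 horner0.
rewrite rmorph_prod horner_prod.
apply: eq_bigr => j _.
by rewrite rmorphD rmorphM /= map_polyX !map_polyC !hornerE.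
Qed.

Lemma e10_eq (a b : nat) : leq a.-1.+1 10 -> leq b.-1.+1 10 ->
  (e10 a == e10 b) = (eqn a.-1 b.-1).
Proof. by move=> ha hb; rewrite -val_eqE /= /e10 !inordK. Qed.
Ltac e10s := rewrite ?e10_eq //=.

Ltac set_neq := apply/eqP => /setP E;
  first [ have := E (e10 1); rewrite !inE; e10s; done
        | have := E (e10 2); rewrite !inE; e10s; done
        | have := E (e10 3); rewrite !inE; e10s; done
        | have := E (e10 4); rewrite !inE; e10s; done
        | have := E (e10 5); rewrite !inE; e10s; done
        | have := E (e10 6); rewrite !inE; e10s; done
        | have := E (e10 7); rewrite !inE; e10s; done
        | have := E (e10 8); rewrite !inE; e10s; done
        | have := E (e10 9); rewrite !inE; e10s; done
        | have := E (e10 10); rewrite !inE; e10s; done ].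

Lemma uniq_NB : uniq V10_nonbases.
Proof.
rewrite /V10_nonbases /= !inE !negb_or.
by repeat (apply/andP; split); try set_neq.
Qed.

Section Comb.
Variables (T : comRingType) (Y : 'I_10 -> T).
Local Notation y k := (Y (e10 k)).

Definition HH (B : {set 'I_10}) : T :=
  if e10 5 \in B then \prod_(j in B | j != e10 5) Y j else 0.

Lemma prod3 (P : pred 'I_10) a b d : a != b -> a != d -> b != d ->
  P =1 [pred j | (j == a) || (j == b) || (j == d)] ->
  \prod_(j | P j) Y j = Y a * Y b * Y d.
Proof.
move=> ab ad bd HP.
rewrite (eq_bigl (fun j => j \in [:: a; b; d])); last first.
  by move=> j; rewrite HP !inE /= orbA.
rewrite -big_uniq /=; last by rewrite !inE negb_or ab ad bd.
by rewrite !big_cons big_nil mulr1 mulrA.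
Qed.

Lemma card4 (a b c d : 'I_10) : a != b -> a != c -> a != d -> b != c -> b != d -> c != d ->
  #|[set a; b; c; d]| = 4%N.
Proof.
move=> ab ac ad bc bd cd.
have -> : [set a; b; c; d] = a |: (b |: (c |: [set d])).
  by apply/setP => x; rewrite !inE !orbA.
by rewrite !cardsU1 cards1 !inE !negb_or ab ac ad bc bd cd.
Qed.

Lemma NB_sum : \sum_(B : {set 'I_10} | (#|B| == 4%N) && (B \in V10_nonbases)) HH B =
  y 1 * y 2 * y 6 + y 3 * y 4 * y 6 + y 6 * y 7 * y 8.
Proof.
rewrite (eq_bigl (fun B : {set 'I_10} => (B \in V10_nonbases) && (#|B| == 4%N))); last first.
  by move=> B; rewrite andbC.
rewrite big_mkcondr -big_uniq; last exact: uniq_NB.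
rewrite /V10_nonbases !big_cons big_nil /HH.
rewrite !inE; e10s; rewrite !if_same.
rewrite !card4; e10s.
rewrite (@prod3 _ (e10 1) (e10 2) (e10 6)); e10s; last first.
  by move=> j; rewrite !inE; case: (eqVneq j (e10 5)) => [->|]; e10s; rewrite ?andbT ?orbF.
rewrite (@prod3 _ (e10 3) (e10 4) (e10 6)); e10s; last first.
  by move=> j; rewrite !inE; case: (eqVneq j (e10 5)) => [->|]; e10s; rewrite ?andbT ?orbF.
rewrite (@prod3 _ (e10 6) (e10 7) (e10 8)); e10s; last first.
  by move=> j; rewrite !inE; case: (eqVneq j (e10 5)) => [->|]; e10s; rewrite ?andbT ?orbF.
ring.
Qed.

Lemma HH_coef : \sum_(B : {set 'I_10} | #|B| == 4%N) HH B =
  (\prod_(i | i != e10 5) ((Y i)%:P * 'X + 1))`_3.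
Proof.
pose Yp := fun i => if i == e10 5 then 1 else Y i.
have := @bigA_distr {poly T} 0 1 *%R +%R 'I_10 (fun i => (Yp i)%:P * 'X)
  (fun i => if i == e10 5 then 0 else 1).
rewrite (bigD1 (e10 5)) //= /Yp eqxx addr0 polyC1 mul1r.
rewrite (eq_bigr (fun i => (Y i)%:P * 'X + 1)); last first.
  by move=> i /negbTE ->.
move=> /(congr1 (fun p : {poly T} => p`_4)); rewrite coefXM /= => ->.
rewrite coef_sum big_mkcond; apply: eq_bigr => B _.
rewrite /HH; case: (boolP (e10 5 \in B)) => e5B; last first.
  rewrite (bigD1 (e10 5)) //= (negbTE e5B) eqxx mul0r coef0.
  by case: ifP.
have -> : \prod_(i < 10) (if i \in B then (if i == e10 5 then 1 else Y i)%:P * 'X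
      else if i == e10 5 then 0 else 1) =
    (\prod_(j in B | j != e10 5) Y j)%:P * 'X^#|B|.
  rewrite (bigID (mem B)) /=.
  rewrite (eq_bigr (fun i => (if i == e10 5 then 1 else Y i)%:P * 'X)); last first.
    by move=> i iB; rewrite iB.
  rewrite [X in _ * X]big1; last first.
    move=> i iB; have /negbTE -> : i != e10 5.
      by apply: contraNneq iB => ->.
    by rewrite (negbTE iB).
  rewrite mulr1 big_split /= prodr_const -rmorph_prod /=.
  rewrite (bigD1 (e10 5)) //= eqxx mul1r.
  by rewrite (eq_bigr Y) //; move=> j /andP [_ /negbTE ->].
rewrite coefCM coefXn eq_sym.
by case: eqP => _; rewrite ?mulr1 ?mulr0.
Qed.

Lemma coefL (a : T) (p : {poly T}) k :
  (((a%:P * 'X + 1) * p)`_k.+1 = p`_k.+1 + a * p`_k).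
Proof. by rewrite mulrDl mul1r coefD -mulrA coefCM coefXM /= addrC. Qed.

Lemma coefL0 (a : T) (p : {poly T}) : (((a%:P * 'X + 1) * p)`_0 = p`_0).
Proof. by rewrite mulrDl mul1r coefD -mulrA coefCM coefXM /= mulr0 add0r. Qed.

Lemma unroll (G : 'I_10 -> {poly T}) : \prod_(i | i != e10 5) G i =
  G (inord 0) * (G (inord 1) * (G (inord 2) * (G (inord 3) * (G (inord 5) *
  (G (inord 6) * (G (inord 7) * (G (inord 8) * (G (inord 9) * 1)))))))).
Proof.
rewrite (eq_bigr (fun i => G (inord (val i)))); last by move=> i _; rewrite inord_val.
rewrite (eq_bigl (fun i : 'I_10 => val i != 4%N)); last first.
  by move=> i; rewrite /e10 -val_eqE /= inordK.
rewrite -(big_mkord (fun k => k != 4%N) (fun k => G (inord k))).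
by rewrite /index_iota /= !big_cons big_nil /=.
Qed.

Lemma comb : \sum_(B | V10_basis B) HH B =
  (y 1 * y 2 * y 3 + y 1 * y 2 * y 4 + y 1 * y 2 * y 6 + y 1 * y 2 * y 7 + y 1 * y 2 * y 8 + y 1 * y 2 * y 9 + y 1 * y 2 * y 10 + y 1 * y 3 * y 4 + y 1 * y 3 * y 6 + y 1 * y 3 * y 7 + y 1 * y 3 * y 8 + y 1 * y 3 * y 9 + y 1 * y 3 * y 10 + y 1 * y 4 * y 6 + y 1 * y 4 * y 7 + y 1 * y 4 * y 8 + y 1 * y 4 * y 9 + y 1 * y 4 * y 10 + y 1 * y 6 * y 7 + y 1 * y 6 * y 8 + y 1 * y 6 * y 9 + y 1 * y 6 * y 10 + y 1 * y 7 * y 8 + y 1 * y 7 * y 9 + y 1 * y 7 * y 10 + y 1 * y 8 * y 9 + y 1 * y 8 * y 10 + y 1 * y 9 * y 10 + y 2 * y 3 * y 4 + y 2 * y 3 * y 6 + y 2 * y 3 * y 7 + y 2 * y 3 * y 8 + y 2 * y 3 * y 9 + y 2 * y 3 * y 10 + y 2 * y 4 * y 6 + y 2 * y 4 * y 7 + y 2 * y 4 * y 8 + y 2 * y 4 * y 9 + y 2 * y 4 * y 10 + y 2 * y 6 * y 7 + y 2 * y 6 * y 8 + y 2 * y 6 * y 9 + y 2 * y 6 * y 10 + y 2 * y 7 * y 8 + y 2 * y 7 * y 9 + y 2 * y 7 * y 10 + y 2 * y 8 * y 9 + y 2 * y 8 * y 10 + y 2 * y 9 * y 10 + y 3 * y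 4 * y 6 + y 3 * y 4 * y 7 + y 3 * y 4 * y 8 + y 3 * y 4 * y 9 + y 3 * y 4 * y 10 + y 3 * y 6 * y 7 + y 3 * y 6 * y 8 + y 3 * y 6 * y 9 + y 3 * y 6 * y 10 + y 3 * y 7 * y 8 + y 3 * y 7 * y 9 + y 3 * y 7 * y 10 + y 3 * y 8 * y 9 + y 3 * y 8 * y 10 + y 3 * y 9 * y 10 + y 4 * y 6 * y 7 + y 4 * y 6 * y 8 + y 4 * y 6 * y 9 + y 4 * y 6 * y 10 + y 4 * y 7 * y 8 + y 4 * y 7 * y 9 + y 4 * y 7 * y 10 + y 4 * y 8 * y 9 + y 4 * y 8 * y 10 + y 4 * y 9 * y 10 + y 6 * y 7 * y 8 + y 6 * y 7 * y 9 + y 6 * y 7 * y 10 + y 6 * y 8 * y 9 + y 6 * y 8 * y 10 + y 6 * y 9 * y 10 + y 7 * y 8 * y 9 + y 7 * y 8 * y 10 + y 7 * y 9 * y 10 + y 8 * y 9 * y 10) - (y 1 * y 2 * y 6 + y 3 * y 4 * y 6 + y 6 * y 7 * y 8).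
Proof.
have E : \sum_(B : {set 'I_10} | #|B| == 4%N) HH B =
   \sum_(B : {set 'I_10} | (#|B| == 4%N) && (B \in V10_nonbases)) HH B +
   \sum_(B | V10_basis B) HH B.
  by rewrite (bigID (fun B => B \in V10_nonbases)).
rewrite NB_sum HH_coef in E.
rewrite -[\sum_(B | V10_basis B) HH B](addKr (y 1 * y 2 * y 6 + y 3 * y 4 * y 6 + y 6 * y 7 * y 8)) -E.
rewrite unroll !coefL !coefL0 !coef1 /= /e10 /=.
ring.
Qed.
End Comb.

Notation CC := (R[i]).
Notation Rc := (@complex.Re R).
Notation Ic := (@complex.Im R).

Lemma cReD (x y : CC) : Rc (x + y) = Rc x + Rc y. Proof. by case: x => ? ?; case: y => ? ?; reflexivity. Qed.
Lemma cImD (x y : CC) : Ic (x + y) = Ic x + Ic y. Proof. by case: x => ? ?; case: y => ? ?; reflexivity. Qed.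
Lemma cReN (x : CC) : Rc (- x) = - Rc x. Proof. by case: x => ? ?; reflexivity. Qed.
Lemma cImN (x : CC) : Ic (- x) = - Ic x. Proof. by case: x => ? ?; reflexivity. Qed.
Lemma cReB (x y : CC) : Rc (x - y) = Rc x - Rc y. Proof. by rewrite cReD cReN. Qed.
Lemma cImB (x y : CC) : Ic (x - y) = Ic x - Ic y. Proof. by rewrite cImD cImN. Qed.
Lemma cReM (x y : CC) : Rc (x * y) = Rc x * Rc y - Ic x * Ic y.
Proof. by case: x => a b; case: y => c d; reflexivity. Qed.
Lemma cImM (x y : CC) : Ic (x * y) = Rc x * Ic y + Ic x * Rc y.
Proof. by case: x => a b; case: y => c d /=; ring. Qed.
Lemma cReC (c : R) : Rc (c%:C)%C = c. Proof. by []. Qed.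
Lemma cImC (c : R) : Ic (c%:C)%C = 0. Proof. by []. Qed.
Lemma cRe0 : Rc (0 : CC) = 0. Proof. by []. Qed.
Lemma cIm0 : Ic (0 : CC) = 0. Proof. by []. Qed.
Lemma cRe1 : Rc (1 : CC) = 1. Proof. by []. Qed.
Lemma cIm1 : Ic (1 : CC) = 0. Proof. by []. Qed.

Definition cplxE := (cReD, cImD, cReB, cImB, cReN, cImN, cReM, cImM, cReC, cImC, cRe0, cIm0, cRe1, cIm1).

Lemma cplx_neq0 (x : CC) : x != 0 -> 0 < Rc x ^+ 2 + Ic x ^+ 2.
Proof.
case: x => a b /= H.
rewrite lt_neqAle addr_ge0 ?sqr_ge0 // andbT eq_sym.
apply: contra H; rewrite paddr_eq0 ?sqr_ge0 // !sqrf_eq0 => /andP[/eqP-> /eqP->].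
by [].
Qed.

Definition cross (d a : CC) := Ic d * Rc a - Rc d * Ic a.

Lemma GL_inv (y : R) (s : CC) (rs : seq CC) : 0 <= y * Ic s ->
  (forall r, r \in rs -> y * Ic r < 0) ->
  [/\ (\prod_(r <- rs) ('X - r%:P)).[s] != 0,
      y * cross ((\prod_(r <- rs) ('X - r%:P))^`()).[s] (\prod_(r <- rs) ('X - r%:P)).[s] <= 0 &
      (rs != [::] -> y * cross ((\prod_(r <- rs) ('X - r%:P))^`()).[s] (\prod_(r <- rs) ('X - r%:P)).[s] < 0)].
Proof.
move=> hs; elim: rs => [|r rs IH] Hr.
  rewrite big_nil derivC horner0 hornerC; split => //; first exact: oner_neq0.
  by rewrite /cross cIm0 cRe0 !mul0r subrr mulr0.
have [a0 c0 _] : [/\ (\prod_(r <- rs) ('X - r%:P)).[s] != 0,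
      y * cross ((\prod_(r <- rs) ('X - r%:P))^`()).[s] (\prod_(r <- rs) ('X - r%:P)).[s] <= 0 &
      (rs != [::] -> y * cross ((\prod_(r <- rs) ('X - r%:P))^`()).[s] (\prod_(r <- rs) ('X - r%:P)).[s] < 0)].
  by apply: IH => r' h; apply: Hr; rewrite inE h orbT.
have hr := Hr r (mem_head r rs).
rewrite big_cons derivM derivXsubC mul1r.
move: a0 c0; set P0 := \prod_(_ <- _) _ => a0 c0.
rewrite !(hornerE, hornerM, hornerXsubC).
set a := P0.[s] in a0 c0 *; set d := P0^`().[s] in c0 *.
have na := @cplx_neq0 _ a0.
have sr : s - r != 0.
  apply/eqP => E; have : Ic (s - r) = 0 by rewrite E.
  rewrite cImB => /eqP; rewrite subr_eq0 => /eqP E'.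
  by move: hs; rewrite E' leNgt hr.
have key : cross (a + (s - r) * d) ((s - r) * a) =
  - (Ic s - Ic r) * (Rc a ^+ 2 + Ic a ^+ 2) +
  ((Rc s - Rc r) ^+ 2 + (Ic s - Ic r) ^+ 2) * cross d a.
  by rewrite /cross !cplxE; ring.
have lt : y * cross (a + (s - r) * d) ((s - r) * a) < 0.
  rewrite key.
  have h1 : 0 < y * (Ic s - Ic r) by rewrite mulrBr; lra.
  have h2 : 0 <= (Rc s - Rc r) ^+ 2 + (Ic s - Ic r) ^+ 2 by rewrite addr_ge0 ?sqr_ge0.
  nra.
split => //; first by rewrite mulf_neq0.
exact: ltW.
Qed.

Lemma GL (y : R) (p : {poly CC}) : p^`() != 0 ->
  (forall s, 0 <= y * Ic s -> p.[s] != 0) ->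
  forall s, 0 <= y * Ic s -> (p^`()).[s] != 0.
Proof.
move=> dp Hp s hs.
have p0 : p != 0 by apply: contraNneq dp => ->; rewrite deriv0.
have [rs Hrs] := closed_field_poly_normal p.
have Hr : forall r, r \in rs -> y * Ic r < 0.
  move=> r rin; rewrite ltNge; apply/negP => hr.
  have := Hp r hr; rewrite Hrs hornerZ.
  have -> : (\prod_(z <- rs) ('X - z%:P)).[r] = 0.
    by apply/rootP; rewrite root_prod_XsubC.
  by rewrite mulr0 eqxx.
have [_ _ H3] := @GL_inv y s rs hs Hr.
have rs0 : rs != [::].
  apply: contraNneq dp => E; rewrite Hrs E big_nil alg_polyC derivC //.
rewrite Hrs derivZ hornerZ mulf_neq0 //; first by rewrite lead_coef_eq0.
apply/eqP => E; have := H3 rs0; rewrite E /cross cRe0 cIm0 !mul0r subrr mulr0 ltxx.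
by [].
Qed.

Lemma cImV (x : CC) : Ic (x^-1) = - Ic x / (Rc x ^+ 2 + Ic x ^+ 2).
Proof. by case: x => a b /=; rewrite mulNr. Qed.
Lemma cReV (x : CC) : Rc (x^-1) = Rc x / (Rc x ^+ 2 + Ic x ^+ 2).
Proof. by case: x => a b /=. Qed.

Lemma Im_div (N D : CC) : Ic (N / D) = cross N D / (Rc D ^+ 2 + Ic D ^+ 2).
Proof. rewrite cImM cReV cImV /cross; ring. Qed.

Lemma cReNat n : Rc (n%:R : CC) = n%:R.
Proof. by rewrite -(rmorph_nat (real_complex R)) cReC. Qed.
Lemma cImNat n : Ic (n%:R : CC) = 0.
Proof. by rewrite -(rmorph_nat (real_complex R)) cImC. Qed.

Definition nrm (x : CC) := Rc x ^+ 2 + Ic x ^+ 2.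
Lemma nrm_ge0 x : 0 <= nrm x. Proof. by rewrite /nrm addr_ge0 ?sqr_ge0. Qed.

Lemma pair_block (y : R) (s X1 X2 : CC) : 0 <= y * Ic s -> 0 < y * Ic X1 -> 0 < y * Ic X2 ->
  s + X1 + X2 != 0 /\
  0 <= y * Ic ((s * (X1 + X2) + 4%:R * X1 * X2) / (s + X1 + X2)).
Proof.
move=> hs h1 h2.
have hD : 0 < y * Ic (s + X1 + X2) by rewrite !cImD !mulrDr; lra.
have D0 : s + X1 + X2 != 0.
  by apply/eqP => E; move: hD; rewrite E cIm0 mulr0 ltxx.
split => //; rewrite Im_div mulrA; apply: divr_ge0; last first.
  by rewrite addr_ge0 ?sqr_ge0.
have -> : y * cross (s * (X1 + X2) + 4%:R * X1 * X2) (s + X1 + X2) =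
  (y * Ic X1) * nrm (s + 2%:R * X2) + (y * Ic X2) * nrm (s + 2%:R * X1) +
  (y * Ic s) * nrm (X1 - X2).
  rewrite /cross /nrm !cplxE; ring.
by apply/addr_ge0; [try apply/addr_ge0|]; apply/mulr_ge0; rewrite ?nrm_ge0 //; apply: ltW.
Qed.

Lemma single_block (y : R) (s X : CC) : 0 <= y * Ic s -> 0 < y * Ic X ->
  s + X != 0 /\ 0 <= y * Ic ((s * X) / (s + X)).
Proof.
move=> hs h1.
have hD : 0 < y * Ic (s + X) by rewrite !cImD !mulrDr; lra.
have D0 : s + X != 0.
  by apply/eqP => E; move: hD; rewrite E cIm0 mulr0 ltxx.
split => //; rewrite Im_div mulrA; apply: divr_ge0; last first.
  by rewrite addr_ge0 ?sqr_ge0.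
have -> : y * cross (s * X) (s + X) = (y * Ic X) * nrm s + (y * Ic s) * nrm X.
  rewrite /cross /nrm !cplxE; ring.
by apply/addr_ge0; [try apply/addr_ge0|]; apply/mulr_ge0; rewrite ?nrm_ge0 //; apply: ltW.
Qed.

Section QSec.
Variables (X1 X2 X3 X4 X6 X7 X8 X9 X10 : CC).

Definition Lp (a : CC) : {poly CC} := 'X + a%:P.
Definition m0 := X1 + X2 + X3 + X4 + X7 + X8 + X9 + X10 + 4%:R * X6.
Definition Qp : {poly CC} :=
  Lp m0 * (Lp (X1 + X2) * (Lp (X3 + X4) * (Lp (X7 + X8) * (Lp X9 * Lp X10))))
  - ((X1 - X2) ^+ 2)%:P * (Lp (X3 + X4) * (Lp (X7 + X8) * (Lp X9 * Lp X10)))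
  - ((X3 - X4) ^+ 2)%:P * (Lp (X1 + X2) * (Lp (X7 + X8) * (Lp X9 * Lp X10)))
  - ((X7 - X8) ^+ 2)%:P * (Lp (X1 + X2) * (Lp (X3 + X4) * (Lp X9 * Lp X10)))
  - (X9 ^+ 2)%:P * (Lp (X1 + X2) * (Lp (X3 + X4) * (Lp (X7 + X8) * Lp X10)))
  - (X10 ^+ 2)%:P * (Lp (X1 + X2) * (Lp (X3 + X4) * (Lp (X7 + X8) * Lp X9))).

Definition Gv : CC := (X1 * X2 * X3 + X1 * X2 * X4 + X1 * X2 * X6 + X1 * X2 * X7 + X1 * X2 * X8 + X1 * X2 * X9 + X1 * X2 * X10 + X1 * X3 * X4 + X1 * X3 * X6 + X1 * X3 * X7 + X1 * X3 * X8 + X1 * X3 * X9 + X1 * X3 * X10 + X1 * X4 * X6 + X1 * X4 * X7 + X1 * X4 * X8 + X1 * X4 * X9 + X1 * X4 * X10 + X1 * X6 * X7 + X1 * X6 * X8 + X1 * X6 * X9 + X1 * X6 * X10 + X1 * X7 * X8 + X1 * X7 * X9 + X1 * X7 * X10 + X1 * X8 * X9 + X1 * X8 * X10 + X1 * X9 * X10 + X2 * X3 * X4 + X2 * X3 * X6 + X2 * X3 * X7 + X2 * X3 * X8 + X2 * X3 * X9 + X2 * X3 * X10 + X2 * X4 * X6 + X2 * X4 * X7 + X2 * X4 * X8 + X2 * X4 * X9 + X2 * X4 * X10 + X2 * X6 * X7 + X2 * X6 * X8 + X2 * X6 * X9 + X2 * X6 * X10 + X2 * X7 * X8 + X2 *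 X7 * X9 + X2 * X7 * X10 + X2 * X8 * X9 + X2 * X8 * X10 + X2 * X9 * X10 + X3 * X4 * X6 + X3 * X4 * X7 + X3 * X4 * X8 + X3 * X4 * X9 + X3 * X4 * X10 + X3 * X6 * X7 + X3 * X6 * X8 + X3 * X6 * X9 + X3 * X6 * X10 + X3 * X7 * X8 + X3 * X7 * X9 + X3 * X7 * X10 + X3 * X8 * X9 + X3 * X8 * X10 + X3 * X9 * X10 + X4 * X6 * X7 + X4 * X6 * X8 + X4 * X6 * X9 + X4 * X6 * X10 + X4 * X7 * X8 + X4 * X7 * X9 + X4 * X7 * X10 + X4 * X8 * X9 + X4 * X8 * X10 + X4 * X9 * X10 + X6 * X7 * X8 + X6 * X7 * X9 + X6 * X7 * X10 + X6 * X8 * X9 + X6 * X8 * X10 + X6 * X9 * X10 + X7 * X8 * X9 + X7 * X8 * X10 + X7 * X9 * X10 + X8 * X9 * X10) - (X1 * X2 * X6 + X3 * X4 * X6 + X6 * X7 * X8).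

Lemma coefLX (a : CC) (p : {poly CC}) k :
  ((Lp a * p)`_k.+1 = p`_k + a * p`_k.+1).
Proof. by rewrite /Lp mulrDl coefD coefXM coefCM. Qed.
Lemma coefLX0 (a : CC) (p : {poly CC}) : ((Lp a * p)`_0 = a * p`_0).
Proof. by rewrite /Lp mulrDl coefD coefXM coefCM add0r. Qed.
Lemma coefL1 (a : CC) k : (Lp a)`_k = (k == 1)%:R + a * (k == 0)%:R.
Proof. by rewrite /Lp coefD coefX coefC; case: k => [|[|k]] /=; rewrite ?mulr1 ?mulr0. Qed.

Lemma Q3 : (Qp^`()^`()^`()).[0] = 24%:R * Gv.
Proof.
rewrite horner_coef0 !coef_deriv.
rewrite /Qp !coefB !coefCM !coefLX !coefLX0 !coefL1 /=.
rewrite /m0 /Gv.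
ring.
Qed.

Lemma Q6 : Qp`_6 = 1.
Proof.
rewrite /Qp !coefB !coefCM !coefLX !coefL1 /=.
ring.
Qed.

Lemma Q3_neq0 : Qp^`()^`()^`() != 0.
Proof.
apply/eqP => E.
have := congr1 (fun p : {poly CC} => p`_3) E.
rewrite !coef_deriv Q6 coef0 => /eqP.
by rewrite -!mulrnA pnatr_eq0.
Qed.

Variable y : R.
Hypotheses (h1 : 0 < y * Ic X1) (h2 : 0 < y * Ic X2) (h3 : 0 < y * Ic X3)
  (h4 : 0 < y * Ic X4) (h6 : 0 < y * Ic X6) (h7 : 0 < y * Ic X7)
  (h8 : 0 < y * Ic X8) (h9 : 0 < y * Ic X9) (h10 : 0 < y * Ic X10).

Lemma Q_nonroot s : 0 <= y * Ic s -> Qp.[s] != 0.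
Proof.
move=> hs.
have [D1 b1] := @pair_block _ _ _ _ hs h1 h2.
have [D2 b2] := @pair_block _ _ _ _ hs h3 h4.
have [D3 b3] := @pair_block _ _ _ _ hs h7 h8.
have [D9 b9] := @single_block _ _ _ hs h9.
have [D10 b10] := @single_block _ _ _ hs h10.
set f1 := (s * (X1 + X2) + 4%:R * X1 * X2) / (s + X1 + X2) in b1.
set f2 := (s * (X3 + X4) + 4%:R * X3 * X4) / (s + X3 + X4) in b2.
set f3 := (s * (X7 + X8) + 4%:R * X7 * X8) / (s + X7 + X8) in b3.
set f9 := (s * X9) / (s + X9) in b9.
set f10 := (s * X10) / (s + X10) in b10.
pose F : CC := s + 4%:R * X6 + f1 + f2 + f3 + f9 + f10.
have hF : 0 < y * Ic F.
  rewrite /F !cImD !mulrDr cImM cReNat cImNat mul0r addr0.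
  have : 0 < y * (4%:R * Ic X6) by rewrite mulrCA pmulr_rgt0 // ltr0n.
  lra.
have F0 : F != 0 by apply/eqP => E; move: hF; rewrite E cIm0 mulr0 ltxx.
have -> : Qp.[s] = ((s + X1 + X2) * (s + X3 + X4) * (s + X7 + X8) * (s + X9) * (s + X10) * F : CC).
  rewrite /Qp /Lp /m0 /F /f1 /f2 /f3 /f9 /f10 !(hornerD, hornerN, hornerM, hornerX, hornerC).
  field.
  by rewrite D1 D2 D3 D9 D10.
by rewrite !mulf_neq0.
Qed.

Lemma Gv_neq0 : Gv != 0.
Proof.
have Q1 : Qp^`() != 0 by apply: contraNneq Q3_neq0 => ->; rewrite !deriv0.
have Q2 : Qp^`()^`() != 0 by apply: contraNneq Q3_neq0 => ->; rewrite !deriv0.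
have H1 := @GL y _ Q1 Q_nonroot.
have H2 := @GL y _ Q2 H1.
have H3 := @GL y _ Q3_neq0 H2.
have := H3 0; rewrite cIm0 mulr0 lexx Q3 => /(_ isT).
by rewrite mulf_eq0 negb_or => /andP [].
Qed.

End QSec.

Theorem lemma4p3 : stable (mderiv (e10 5) f10).
Proof.
move=> v w vpos z Hz.
have S := @root_sum v w z Hz.
pose Y := fun j : 'I_10 => (z * (v j)%:C + (w j)%:C)%C.
have S' : \sum_(B | V10_basis B) @HH _ Y B = 0 := S.
rewrite (@comb _ Y) in S'.
case: (eqVneq (complex.Im z) 0) => // ny; exfalso.
have hsq : 0 < complex.Im z ^+ 2 by rewrite lt_def sqrf_eq0 ny sqr_ge0.
have hk : forall j, 0 < complex.Im z * Ic (Y j).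
  move=> j; have -> : Ic (Y j) = complex.Im z * v j.
    by rewrite /Y cImD cImM cReC !cImC mulr0 add0r addr0.
  have := vpos j; nra.
have := @Gv_neq0 (Y (e10 1)) (Y (e10 2)) (Y (e10 3)) (Y (e10 4)) (Y (e10 6))
  (Y (e10 7)) (Y (e10 8)) (Y (e10 9)) (Y (e10 10)) (complex.Im z)
  (hk _) (hk _) (hk _) (hk _) (hk _) (hk _) (hk _) (hk _) (hk _).
by rewrite /Gv S' eqxx.
Qed.
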